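(* Let $X$ be an integrable real random variable ($d=1$) and let $Y_1,\ldots,Y_k\in\mathbb{R}^m$ be conditionally i.i.d. given $X$ with common conditional density $f_{Y|X}$ (joint density $f_X(x)\prod_{i=1}^k f_{Y|X}(y_i|x)$). Let $Y$ be a generic observation with $(X,Y)$ having density $f_X(x)f_{Y|X}(y|x)$, $g(y)=\mathbb{E}[X|Y=y]$, $Z=X-g(Y)$, and $D_2(k)=\mathbb{E}[\min_{1\le i\le k}(X-g(Y_i))^2]$. Assume that conditioned on $X=x$, $Z$ has a Lebesgue density $f_{Z|X}(z|x)$, and that for some $r>0$, \[ M=\sup_{x}\sup_{|z|\le r}f_{Z|X}(z|x)<\infty. \] Then for all sufficiently large $k$, \[ D_2(k)\ge e^{-2}\left(\frac{1}{2M\left(1+\frac k2\right)}\right)^2, \] so that $D_2(k)=\Omega(k^{-2})$.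
   Context: $f=\Omega(h)$ means $f(k)\ge c\,h(k)$ for some $c>0$ and all sufficiently large $k$. *)

(* Defs.v *)
From HB Require Import structures.
From mathcomp Require Import all_boot all_order all_algebra.
From mathcomp Require Import all_classical all_reals all_analysis.
Set Implicit Arguments. Unset Strict Implicit. Unset Printing Implicit Defensive.
Import Order.TTheory GRing.Theory Num.Theory.
Import numFieldNormedType.Exports.
Local Open Scope classical_set_scope.
Local Open Scope ring_scope.

(* Densities are w.r.t. Lebesgue
   measure on R (for X and Z) and w.r.t. a sigma-finite reference measure
   [nu] on the observation space T (Lebesgue measure on R^m in the paper). *)

Section Defs.
Variables (R : realType) (d : measure_display) (T : measurableType d).
Variable (nu : {measure set T -> \bar R}).

Fixpoint iter_int (n : nat) (F : seq T -> \bar R) : \bar R :=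
  match n with
  | 0 => F [::]
  | n'.+1 => (\int[nu]_y iter_int n' (fun s => F (y :: s)))%E
  end.

Definition post_mean (fX : R -> R) (f : R -> T -> R) (y : T) : R :=
  fine (\int[lebesgue_measure]_x (x * fX x * f x y)%:E)%E /
  fine (\int[lebesgue_measure]_x (fX x * f x y)%:E)%E.

Definition D2 (fX : R -> R) (f : R -> T -> R) (k : nat) : \bar R :=
  (\int[lebesgue_measure]_x
     ((fX x)%:E *
      iter_int k (fun s =>
        (\prod_(y <- s) f x y)%:E *
        \big[mine/+oo]_(y <- s) ((x - post_mean fX f y) ^+ 2)%:E)))%E.

(* M = sup_x sup_{|z| <= r} f_{Z|X}(z|x)   (fZ z x = f_{Z|X}(z|x)) *)
Definition Msup (fZ : R -> R -> R) (r : R) : \bar R :=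
  ereal_sup [set (fZ p.1 p.2)%:E | p in [set p : R * R | `|p.1| <= r]].

End Defs.

(* Main.v *)
Require Import Defs.
From HB Require Import structures.
From mathcomp Require Import all_boot all_order all_algebra.
From mathcomp Require Import all_classical all_reals all_analysis measurable_realfun.
From mathcomp Require Import ring lra.
Import Order.TTheory GRing.Theory Num.Theory.
Import numFieldNormedType.Exports.
Local Open Scope classical_set_scope.
Local Open Scope ring_scope.

Section gen.
Context d (T : measurableType d) (R : realType) (mu : {measure set T -> \bar R}).
Local Open Scope ereal_scope.

Lemma int_le_gen (g h : T -> \bar R) : (forall y, 0 <= g y) -> (forall y, g y <= h y) ->
  \int[mu]_y g y <= \int[mu]_y h y.
Proof.
move=> g0 gh.
have h0 y : 0 <= h y by apply: le_trans (g0 y) (gh y).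
rewrite (ge0_integralTE mu g0) (ge0_integralTE mu h0) /=.
apply: ereal_sup_le => _ [s /= sg <-]; exists s => //= y; exact: le_trans (sg y) (gh y).
Qed.

Lemma int_scale_gen (k : R) (h : T -> \bar R) : (0 <= k)%R -> (forall y, 0 <= h y) ->
  k%:E * \int[mu]_y h y <= \int[mu]_y (k%:E * h y).
Proof.
move=> k0 h0.
have kh0 y : 0 <= k%:E * h y by rewrite mule_ge0.
have [->|kpos] := eqVneq k 0%R.
  by rewrite mul0e; apply: integral_ge0 => y _; rewrite mul0e.
have kgt0 : (0 < k)%R by rewrite lt0r kpos.
rewrite (ge0_integralTE mu h0) (ge0_integralTE mu kh0) /= -ereal_sup_pZl //.
apply: ereal_sup_le => _ [_ [s /= sh <-] <-].
exists (scale_nnsfun s k0) => /=.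
  by move=> y /=; rewrite EFinM; apply: lee_wpmul2l; rewrite ?lee_fin.
exact: sintegralrM.
Qed.

End gen.
Arguments int_le_gen {d T R mu}.
Arguments int_scale_gen {d T R mu}.

Section iter.
Context (R : realType) d (T : measurableType d) (nu : {measure set T -> \bar R}).
Local Open Scope ereal_scope.

Lemma iter_ge0 n (F : seq T -> \bar R) : (forall s, 0 <= F s) -> 0 <= iter_int nu n F.
Proof.
elim: n F => [|n IH] F F0 /=; first exact: F0.
apply: integral_ge0 => y _; apply: IH => s; exact: F0.
Qed.

Lemma iter_le n (F G : seq T -> \bar R) : (forall s, 0 <= G s) -> (forall s, G s <= F s) ->
  iter_int nu n G <= iter_int nu n F.
Proof.
elim: n F G => [|n IH] F G G0 GF /=; first exact: GF.
apply: int_le_gen => [y|y]; first by apply: iter_ge0 => s; exact: G0.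
by apply: IH => s; [exact: G0|exact: GF].
Qed.

Lemma iter_prod (hr : T -> R) (i : R) : (forall y, 0 <= hr y)%R ->
  \int[nu]_y (hr y)%:E = i%:E -> forall n (c : R), (0 <= c)%R ->
  ((c * i ^+ n)%:E <= iter_int nu n (fun s => (c * \prod_(y <- s) hr y)%:E)).
Proof.
move=> h0 Hi n; elim: n => [|n IH] c c0 /=.
  by rewrite expr0 big_nil.
have i0 : (0 <= i)%R by rewrite -lee_fin -Hi; apply: integral_ge0 => y _; rewrite lee_fin.
apply: (@le_trans _ _ (\int[nu]_y ((c * i ^+ n)%:E * (hr y)%:E))).
  rewrite exprSr mulrA EFinM -Hi; apply: int_scale_gen.
    by rewrite mulr_ge0 // exprn_ge0.
  by move=> y; rewrite lee_fin.
apply: int_le_gen => y.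
  by rewrite -EFinM lee_fin mulr_ge0 // mulr_ge0 // exprn_ge0.
have -> : (fun s => (c * \prod_(z <- y :: s) hr z)%:E) = (fun s => ((c * hr y) * \prod_(z <- s) hr z)%:E).
  by apply: funext => s; rewrite big_cons mulrA.
rewrite -EFinM mulrAC; apply: IH; by rewrite mulr_ge0.
Qed.

Lemma bigmin_ge (a : \bar R) (s : seq T) (F : T -> \bar R) : (forall y, y \in s -> a <= F y) ->
  a <= \big[mine/+oo]_(y <- s) F y.
Proof.
elim: s => [|y s IH] H; rewrite ?big_nil ?big_cons ?leey //.
rewrite le_min H ?mem_head // IH // => z zs; apply: H; by rewrite in_cons zs orbT.
Qed.

Lemma G_lb (x t : R) (g : T -> R) (fx : T -> R) (S : set T) :
 (forall y, 0 <= fx y)%R -> (forall y, S y -> t^+2 <= (x - g y)^+2)%R ->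
 forall s, ((t^+2 * \prod_(y <- s) (if y \in S then fx y else 0))%:E <=
   (\prod_(y <- s) fx y)%:E * \big[mine/+oo]_(y <- s) ((x - g y) ^+ 2)%:E).
Proof.
move=> f0 HS s.
have [allS|] := boolP (all (fun y => y \in S) s).
  rewrite (@eq_big_seq _ _ _ _ _ _ fx); last by move=> y ys; rewrite (allP allS y ys).
  rewrite mulrC EFinM; apply: lee_wpmul2l; first by rewrite lee_fin prodr_ge0.
  apply: bigmin_ge => y ys; rewrite lee_fin; apply: HS; exact: set_mem (allP allS y ys).
move/allPn => [y ys yS].
have -> : (\prod_(y <- s) (if y \in S then fx y else 0) = 0)%R.
  apply/eqP; rewrite prodf_seq_eq0; apply/hasP; exists y => //; by rewrite (negbTE yS) eqxx.
rewrite mulr0 mule_ge0 //; first by rewrite lee_fin prodr_ge0.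
apply: bigmin_ge => z _; by rewrite lee_fin sqr_ge0.
Qed.

End iter.

Section main.
Context (R : realType) d (T : measurableType d) (nu : {measure set T -> \bar R}).

Lemma lebesgue_part (fZ : R -> R -> R) (r M t x : R) :
  (forall x, measurable_fun setT (fun z => fZ z x)) -> (forall x z, 0 <= fZ z x)%R ->
  (\int[lebesgue_measure]_z (fZ z x)%:E = 1)%E ->
  Msup fZ r = M%:E -> (0 < t)%R -> (t <= r)%R ->
  ((1 - 2 * M * t)%:E <= \int[lebesgue_measure]_(z in ~` `[(-t)%R, t]) (fZ z x)%:E)%E.
Proof.
Local Open Scope ereal_scope.
move=> mfZ fZ0 H1 HM t0 tr.
have mI : measurable (`[(-t)%R, t] : set R) by exact: measurable_itv.
have mA : measurable (~` (`[(-t)%R, t] : set R)) by exact: measurableC.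
have mE : measurable_fun [set: R] (EFin \o (fun z => fZ z x)) by apply/measurable_EFinP.
have := H1; rewrite -(setUv (`[(-t)%R, t] : set R)) ge0_integral_setU //; first last.
- by rewrite /disj_set setICr.
- by move=> z _; rewrite lee_fin.
- by rewrite setUv.
set b := \int[lebesgue_measure]_(z in _) _; set a := \int[lebesgue_measure]_(z in _) _.
move=> Hab.
have a0 : 0 <= a by apply: integral_ge0 => z _; rewrite lee_fin.
have b0 : 0 <= b by apply: integral_ge0 => z _; rewrite lee_fin.
have aup : a <= (M * (2 * t))%:E.
  apply: (@le_trans _ _ (\int[lebesgue_measure]_(z in (`[(-t)%R, t] : set R)) (cst M%:E) z)).
    rewrite /a; apply: (ge0_le_integral lebesgue_measure mI).
    - by move=> z _; rewrite lee_fin.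
    - exact: measurable_funS mE.
    - exact: measurable_cst.
    - move=> z /=; rewrite in_itv /= => /andP[h1 h2].
      rewrite -HM; apply: ereal_sup_ubound; exists (z, x) => //=.
      rewrite ler_norml; apply/andP; split; lra.
  rewrite integral_cst //.
  have HL : lebesgue_measure (`[(-t)%R, t] : set R) = (2 * t)%:E.
    rewrite (@lebesgue_measure_itv R `[(-t)%R, t]) /= lte_fin.
    have -> : (- t < t)%R by lra.
    by rewrite -EFinD; congr (_%:E); lra.
  by rewrite [X in (_ * X)%E](_ : _ = (2 * t)%:E) ?HL // -EFinM.
have afin : a \is a fin_num by rewrite ge0_fin_numE // (le_lt_trans aup) ?ltry.
have bfin : b \is a fin_num.
  rewrite ge0_fin_numE //; apply: (@le_lt_trans _ _ (a + b)); last by rewrite Hab ltry.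
  by rewrite leeDr.
move: aup Hab; rewrite -(fineK afin) -(fineK bfin) -EFinD !lee_fin => aup /(congr1 fine) /= Hab.
lra.
Qed.
Local Close Scope ereal_scope.

Lemma main_lb (fX : R -> R) (f : R -> T -> R) (fZ : R -> R -> R) (r M t : R) :
  measurable_fun setT fX -> (forall x, 0 <= fX x) ->
  (\int[lebesgue_measure]_x (fX x)%:E = 1)%E ->
  (forall x y, 0 <= f x y) -> (forall x, (\int[nu]_y (f x y)%:E = 1)%E) ->
  (forall x, measurable_fun setT (fun z => fZ z x)) -> (forall x z, 0 <= fZ z x) ->
  (forall x (A : set R), measurable A ->
     (\int[nu]_(y in [set y | A (x - post_mean fX f y)%R]) (f x y)%:E
      = \int[lebesgue_measure]_(z in A) (fZ z x)%:E)%E) ->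
  Msup fZ r = M%:E -> 0 < t -> t <= r -> 2 * M * t <= 1 ->
  forall k, ((t ^+ 2 * (1 - 2 * M * t) ^+ k)%:E <= D2 nu fX f k)%E.
Proof.
move=> mfX fX0 fX1 f0 f1 mfZ fZ0 HZ HM t0 tr Mt k.
set g := post_mean fX f.
set c := (t ^+ 2 * (1 - 2 * M * t) ^+ k).
have c0 : 0 <= c by rewrite mulr_ge0 ?sqr_ge0 // exprn_ge0 // subr_ge0.
have key : forall x, (c%:E <= iter_int nu k (fun s =>
        (\prod_(y <- s) f x y)%:E *
        \big[mine/+oo]_(y <- s) ((x - g y) ^+ 2)%:E))%E.
  move=> x.
  pose A : set R := ~` `[(-t)%R, t].
  have mA : measurable A by apply: measurableC; exact: measurable_itv.
  pose S := [set y | A (x - g y)].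
  pose hr y := if y \in S then f x y else 0.
  have hr0 y : 0 <= hr y by rewrite /hr; case: ifP.
  have Hhr : (\int[nu]_y (hr y)%:E = \int[lebesgue_measure]_(z in A) (fZ z x)%:E)%E.
    rewrite -HZ // [RHS]integral_mkcond; apply: eq_integral => y _.
    by rewrite /patch /hr; case: ifP.
  have H1 : (\int[lebesgue_measure]_z (fZ z x)%:E = 1)%E.
    rewrite -(f1 x); have := HZ x setT measurableT.
    by rewrite (_ : [set y | setT _] = setT) // => ->.
  have Hlow : ((1 - 2 * M * t)%:E <= \int[nu]_y (hr y)%:E)%E.
    by rewrite Hhr /A; exact: (lebesgue_part fZ r M t x mfZ fZ0 H1 HM t0 tr).
  have Hup : (\int[nu]_y (hr y)%:E <= 1)%E.
    rewrite -(f1 x); apply: int_le_gen => y; rewrite lee_fin // /hr; by case: ifP.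
  set I := (\int[nu]_y (hr y)%:E)%E in Hlow Hup.
  have I0 : (0 <= I)%E by apply: integral_ge0 => y _; rewrite lee_fin.
  have Ifin : I \is a fin_num by rewrite ge0_fin_numE // (le_lt_trans Hup) ?ltry.
  have HI := @iter_prod _ _ _ nu hr (fine I) hr0 (esym (fineK Ifin)) k _ (sqr_ge0 t).
  apply: le_trans (le_trans HI _).
    rewrite lee_fin; apply: ler_wpM2l; first exact: sqr_ge0.
    apply: lerXn2r; rewrite ?nnegrE ?subr_ge0 //.
      by rewrite -lee_fin fineK.
    by rewrite -lee_fin fineK.
  apply: iter_le => s; first by rewrite lee_fin mulr_ge0 ?sqr_ge0 // prodr_ge0.
  apply: G_lb => // y; rewrite /S /A /= => Hy.
  case: (lerP (t ^+ 2) ((x - g y) ^+ 2)) => // hlt; exfalso; apply: Hy.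
  rewrite /= in_itv /=; apply/andP; split; nra.
rewrite /D2.
apply: (@le_trans _ _ (\int[lebesgue_measure]_x ((fX x)%:E * c%:E))%E).
  rewrite ge0_integralZr //.
  - by rewrite fX1 mul1e.
  - exact/measurable_EFinP.
  - by move=> x _; rewrite lee_fin.
apply: int_le_gen => x; first by rewrite -EFinM lee_fin mulr_ge0.
apply: lee_wpmul2l; first by rewrite lee_fin.
exact: key.
Qed.
End main.

Theorem corollary3 (R : realType) (d : measure_display) (T : measurableType d)
  (nu : {measure set T -> \bar R}) (fX : R -> R) (f : R -> T -> R)
  (fZ : R -> R -> R) (r : R) :
  sigma_finite setT nu ->
  (* fX is a probability density of X on R *)
  measurable_fun setT fX ->
  (forall x, 0 <= fX x) ->
  (\int[lebesgue_measure]_x (fX x)%:E = 1)%E ->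
  (* X is integrable *)
  lebesgue_measure.-integrable setT (fun x => (x * fX x)%:E) ->
  (* f(.|x) is a conditional density of Y given X = x, jointly measurable *)
  measurable_fun setT (fun p : R * T => f p.1 p.2) ->
  (forall x y, 0 <= f x y) ->
  (forall x, (\int[nu]_y (f x y)%:E = 1)%E) ->
  (* conditioned on X = x, Z = X - g(Y) has Lebesgue density fZ(.|x) *)
  (forall x, measurable_fun setT (fun z => fZ z x)) ->
  (forall x z, 0 <= fZ z x) ->
  (forall x (A : set R), measurable A ->
     (\int[nu]_(y in [set y | A (x - post_mean fX f y)%R]) (f x y)%:E
      = \int[lebesgue_measure]_(z in A) (fZ z x)%:E)%E) ->
  0 < r ->
  (Msup fZ r < +oo)%E ->
  (exists K : nat, forall k : nat, (K <= k)%N ->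
     ((expR (-2)) * (1 / (2 * fine (Msup fZ r) * (1 + k%:R / 2))) ^+ 2)%:E
       <= D2 nu fX f k)%E
  /\
  (exists c : R, 0 < c /\ exists K : nat, forall k : nat, (K <= k)%N ->
     ((c / k%:R ^+ 2)%:E <= D2 nu fX f k)%E).
Proof.
move=> _ mfX fX0 fX1 _ _ f0 f1 mfZ fZ0 HZ r0 Mfin.
have Mge0 : (0 <= Msup fZ r)%E.
  rewrite /Msup; apply: le_ereal_sup_tmp; exists (fZ 0 0)%:E; last by rewrite lee_fin.
  by exists (0, 0) => //=; rewrite normr0 ltW.
have Mfn : Msup fZ r \is a fin_num by rewrite ge0_fin_numE.
set M := fine (Msup fZ r).
have HM : Msup fZ r = M%:E by rewrite /M fineK.
have M0 : 0 <= M by rewrite -lee_fin -HM.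
clearbody M.
have ML t := @main_lb R d T nu fX f fZ r M t mfX fX0 fX1 f0 f1 mfZ fZ0 HZ HM.
have D2ge0 k : (0 <= D2 nu fX f k)%E.
  rewrite /D2; apply: integral_ge0 => x _; apply: mule_ge0; first by rewrite lee_fin.
  apply: iter_ge0 => s; apply: mule_ge0; first by rewrite lee_fin prodr_ge0.
  by apply: bigmin_ge => y _; rewrite lee_fin sqr_ge0.
clear Mge0 Mfn HM Mfin fX1 f1.
have [Mz|Mp] : M = 0 \/ 0 < M by move: M0; rewrite le_eqVlt => /orP[/eqP->|->]; [left|right].
  split.
    exists 0%N => k _; rewrite Mz mulr0 mul0r invr0 mulr0 expr2 mulr0 mulr0; exact: D2ge0.
  exists (r ^+ 2); split; first exact: exprn_gt0.
  exists 1%N => k k1.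
  have := ML r r0 (lexx r) _ k.
  rewrite Mz mulr0 mul0r ler01 subr0 expr1n mulr1 => /(_ isT) H.
  apply: le_trans H; rewrite lee_fin ler_pdivrMr; last by rewrite exprn_gt0 // ltr0n.
  apply: ler_peMr; first exact: sqr_ge0.
  by rewrite exprn_ege1 // ler1n.
set K := Num.Def.archi_bound (1 / (M * r)).
have MrP : 0 < M * r by rewrite mulr_gt0.
have HK : 1 / (M * r) < K%:R by apply: archi_boundP; rewrite divr_ge0 // ltW.
have part1 : forall k : nat, (K <= k)%N ->
     (((expR (-2)) * (1 / (2 * M * (1 + k%:R / 2))) ^+ 2)%:E <= D2 nu fX f k)%E.
  move=> k Kk.
  have kK : K%:R <= k%:R :> R by rewrite ler_nat.
  have k1 : 1 / (M * r) < k%:R by apply: lt_le_trans kK.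
  have kpos : 0 < k%:R :> R.
    by apply: le_lt_trans k1; rewrite divr_ge0 // ltW.
  have Mrk : 1 < M * r * k%:R by move: k1; rewrite ltr_pdivrMr // mulrC.
  set t := 1 / (2 * M * (1 + k%:R / 2)).
  have Xp : 0 < 2 * M * (1 + k%:R / 2).
    by rewrite mulr_gt0 ?mulr_gt0 // addr_gt0 // divr_gt0.
  have t0 : 0 < t by rewrite /t divr_gt0.
  have tr : t <= r.
    rewrite /t ler_pdivrMr //; nra.
  have Mt : 2 * M * t = (1 + k%:R / 2)^-1.
    rewrite /t; field; apply/andP; split; lra.
  have Mt1 : 2 * M * t <= 1 by rewrite Mt invf_le1 //; lra.
  apply: le_trans (ML t t0 tr Mt1 k); rewrite lee_fin mulrC; apply: ler_wpM2l; first exact: sqr_ge0.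
  have E1 : 1 - 2 * M * t = (1 + 2 / k%:R)^-1.
    rewrite Mt; field; apply/andP; split; lra.
  have ep : 0 < 1 + 2 / k%:R :> R by apply: addr_gt0; [exact: ltr01 | exact: divr_gt0].
  rewrite E1 exprVn expRN lef_pV2 ?posrE ?expR_gt0 ?exprn_gt0 //.
  have -> : expR (2 : R) = expR (2 / k%:R) ^+ k.
    by rewrite -expRM_natl; congr expR; field; lra.
  apply: lerXn2r; rewrite ?nnegrE ?expR_ge0 ?(ltW ep) //.
  exact: expR_ge1Dx.
split; first by exists K.
exists (expR (-2) / (9 * M ^+ 2)); split.
  by rewrite divr_gt0 ?expR_gt0 // mulr_gt0 // exprn_gt0.
exists K => k Kk; apply: le_trans (part1 k Kk); rewrite lee_fin.
have kK : K%:R <= k%:R :> R by rewrite ler_nat.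
have k1 : 1 / (M * r) < k%:R by apply: lt_le_trans kK.
have kpos : 0 < k%:R :> R by apply: le_lt_trans k1; rewrite divr_ge0 // ltW.
have kge1 : 1 <= k%:R :> R.
  by rewrite ler1n -(ltr0n R).
have -> : expR (-2) / (9 * M ^+ 2) / k%:R ^+ 2 = expR (-2) * (1 / (3 * M * k%:R)) ^+ 2.
  by field; apply/andP; split; lra.
apply: ler_wpM2l; first exact: expR_ge0.
have Xp : 0 < 2 * M * (1 + k%:R / 2).
  by rewrite mulr_gt0 //; first by rewrite mulr_gt0.
have Yp : 0 < 3 * M * k%:R by rewrite mulr_gt0 ?mulr_gt0.
apply: lerXn2r.
- by rewrite nnegrE divr_ge0 // ltW.
- by rewrite nnegrE divr_ge0 // ltW.
rewrite !div1r lef_pV2 ?posrE //.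
nra.
Qed.
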